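(* Let $G$ be a Hausdorff topological group and $d\in\mathbb N$. Then $|M(G)|\le d$ if and only if every nonempty $G$-flow has an orbit of size at most $d$.
   Context: A $G$-flow is a continuous action of $G$ on a compact Hausdorff space. It is minimal if every orbit is dense. $M(G)$ denotes the universal minimal $G$-flow, i.e. the (unique up to isomorphism) minimal $G$-flow that admits a continuous $G$-equivariant map onto every minimal $G$-flow. *)

(* Defs.v *)
From Stdlib Require Import List.
Import ListNotations.

Record Topology (X : Type) := {
  is_open : (X -> Prop) -> Prop;
  open_full : is_open (fun _ => True);
  open_inter : forall U V, is_open U -> is_open V ->
                 is_open (fun x => U x /\ V x);
  open_union : forall (I : Type) (F : I -> X -> Prop),
                 (forall i, is_open (F i)) -> is_open (fun x => exists i, F i x)
}.
Arguments is_open {X} t U.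

Definition continuous {X Y : Type} (tX : Topology X) (tY : Topology Y)
  (f : X -> Y) : Prop :=
  forall V, is_open tY V -> is_open tX (fun x => V (f x)).

(* Joint continuity of f : X x Y -> Z (w.r.t. the product topology),
   written out pointwise with basic open rectangles. *)
Definition continuous2 {X Y Z : Type} (tX : Topology X) (tY : Topology Y)
  (tZ : Topology Z) (f : X -> Y -> Z) : Prop :=
  forall x y W, is_open tZ W -> W (f x y) ->
    exists U V, is_open tX U /\ is_open tY V /\ U x /\ V y /\
      forall a b, U a -> V b -> W (f a b).

Definition hausdorff {X : Type} (t : Topology X) : Prop :=
  forall x y, x <> y -> exists U V, is_open t U /\ is_open t V /\ U x /\ V y /\
    forall z, ~ (U z /\ V z).

Definition compact {X : Type} (t : Topology X) : Prop :=
  forall (I : Type) (F : I -> X -> Prop),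
    (forall i, is_open t (F i)) -> (forall x, exists i, F i x) ->
    exists l : list I, forall x, exists i, In i l /\ F i x.

Record TopGroup := {
  gcar :> Type;
  gmul : gcar -> gcar -> gcar;
  ginv : gcar -> gcar;
  gone : gcar;
  gmulA : forall a b c, gmul a (gmul b c) = gmul (gmul a b) c;
  gmul1l : forall a, gmul gone a = a;
  gmulVl : forall a, gmul (ginv a) a = gone;
  gtop : Topology gcar;
  gmul_cont : continuous2 gtop gtop gtop gmul;
  ginv_cont : continuous gtop gtop ginv
}.

Record Flow (G : TopGroup) := {
  fcar :> Type;
  ftop : Topology fcar;
  fcompact : compact ftop;
  fhausdorff : hausdorff ftop;
  act : G -> fcar -> fcar;
  act1 : forall x, act (gone G) x = x;
  actM : forall g h x, act (gmul G g h) x = act g (act h x);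
  act_cont : continuous2 (gtop G) ftop ftop act
}.
Arguments ftop {G} f.
Arguments act {G} f _ _.

Definition orbit {G : TopGroup} (X : Flow G) (x : X) : X -> Prop :=
  fun y => exists g : G, act X g x = y.

Definition dense {X : Type} (t : Topology X) (A : X -> Prop) : Prop :=
  forall U, is_open t U -> (exists x, U x) -> exists x, U x /\ A x.

Definition minimal_flow {G : TopGroup} (X : Flow G) : Prop :=
  (exists x : X, True) /\ forall x : X, dense (ftop X) (orbit X x).

Definition equivariant {G : TopGroup} (X Y : Flow G) (f : X -> Y) : Prop :=
  forall (g : G) (x : X), f (act X g x) = act Y g (f x).

Definition surjective {A B : Type} (f : A -> B) : Prop :=
  forall b, exists a, f a = b.

Definition universal_minimal_flow {G : TopGroup} (M : Flow G) : Prop :=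
  minimal_flow M /\
  forall Y : Flow G, minimal_flow Y ->
    exists f : M -> Y, continuous (ftop M) (ftop Y) f /\ equivariant M Y f /\
                       surjective f.

Definition card_le {X : Type} (A : X -> Prop) (d : nat) : Prop :=
  exists l : list X, length l <= d /\ forall x, A x -> In x l.

(* Main.v *)
Require Import Defs.
From Stdlib Require Import List Classical ClassicalEpsilon FunctionalExtensionality PropExtensionality ProofIrrelevance.
From mathcomp Require classical_sets.
Import ListNotations.

Lemma zorn_sets (T : Type) (P : (T -> Prop) -> Prop) :
  (forall F : (T -> Prop) -> Prop, (forall X, F X -> P X) ->
     (forall X Y, F X -> F Y -> (forall t, X t -> Y t) \/ (forall t, Y t -> X t)) ->
     P (fun t => exists X, F X /\ X t)) ->
  exists A, P A /\ forall B, (forall t, A t -> B t) -> P B -> forall t, B t -> A t.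
Proof.
  intros H.
  destruct (@classical_sets.Zorn_bigcup T P) as [A [PA HA]].
  - intros F HF Htot.
    assert (E : classical_sets.bigcup F (fun X => X) = (fun t => exists X, F X /\ X t)).
    { apply functional_extensionality; intro t; apply propositional_extensionality.
      unfold classical_sets.bigcup, classical_sets.mkset; split.
      - intros [X h1 h2]; eauto.
      - intros [X [h1 h2]]; exists X; auto. }
    rewrite E. apply H; auto.
  - exists A; split; auto.
    intros B AB PB t Bt. apply NNPP; intro nA.
    apply (HA B); auto. split.
    + exact AB.
    + intro BA. apply nA. apply BA. exact Bt.
Qed.

Lemma open_ext {X} (t : Topology X) (A B : X -> Prop) :
  is_open t A -> (forall x, A x <-> B x) -> is_open t B.
Proof.
  intros HA E.
  replace B with A; auto.
  apply functional_extensionality; intro x; apply propositional_extensionality; auto.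
Qed.

Lemma open_ex {X} (t : Topology X) (Q : (X -> Prop) -> Prop) :
  (forall V, Q V -> is_open t V) -> is_open t (fun x => exists V, Q V /\ V x).
Proof.
  intros H.
  apply open_ext with (A := fun x => exists i : {V | Q V}, proj1_sig i x).
  - apply open_union. intros [V HV]; simpl; auto.
  - intro x; split.
    + intros [[V HV] h]; simpl in h; eauto.
    + intros [V [HV h]]. exists (exist _ V HV); simpl; auto.
Qed.

Lemma open_or {X} (t : Topology X) A B :
  is_open t A -> is_open t B -> is_open t (fun x => A x \/ B x).
Proof.
  intros HA HB.
  apply open_ext with (A := fun x => exists V, (V = A \/ V = B) /\ V x).
  - apply open_ex. intros V [-> | ->]; auto.
  - intro x; split.
    + intros [V [[-> | ->] h]]; auto.
    + intros [h|h]; eauto.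
Qed.

Lemma open_empty {X} (t : Topology X) : is_open t (fun _ => False).
Proof.
  apply open_ext with (A := fun x => exists V, False /\ V x).
  - apply open_ex. intros V [].
  - intro x; split; [intros [V [[] _]] | intros []].
Qed.

Lemma open_full' {X} (t : Topology X) : is_open t (fun _ => True).
Proof. apply open_full. Qed.

Lemma open_neq {X} (t : Topology X) (Ht : hausdorff t) (w : X) :
  is_open t (fun z => z <> w).
Proof.
  apply open_ext with (A := fun z => exists V, (is_open t V /\ ~ V w) /\ V z).
  - apply open_ex. intros V [h _]; auto.
  - intro z; split.
    + intros [V [[_ h1] h2]] E; subst; auto.
    + intro ne. destruct (Ht z w ne) as [U [V [hU [hV [hz [hw hd]]]]]].
      exists U; repeat split; auto. intro Uw. apply (hd w); auto.
Qed.

Lemma open_and {X} (t : Topology X) A B :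
  is_open t A -> is_open t B -> is_open t (fun x => A x /\ B x).
Proof. apply open_inter. Qed.

Lemma act_inv {G : TopGroup} (X : Flow G) g x : act X (ginv G g) (act X g x) = x.
Proof. rewrite <- actM, gmulVl, act1. reflexivity. Qed.

Lemma act_open {G : TopGroup} (X : Flow G) g V :
  is_open (ftop X) V -> is_open (ftop X) (fun z => V (act X g z)).
Proof.
  intro HV.
  apply open_ext with (A := fun z => exists W, (is_open (ftop X) W /\ forall b, W b -> V (act X g b)) /\ W z).
  - apply open_ex. intros W [h _]; auto.
  - intro z; split.
    + intros [W [[_ h] hz]]; auto.
    + intro hz. destruct (act_cont G X g z V HV hz) as [U [W [hU [hW [hg [hwz h]]]]]].
      exists W; split; auto.
Qed.

Definition invariant {G : TopGroup} (X : Flow G) (U : X -> Prop) :=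
  forall g x, U x -> U (act X g x).

Lemma chain_max {T} (F : (T -> Prop) -> Prop)
  (Htot : forall X Y, F X -> F Y -> (forall t, X t -> Y t) \/ (forall t, Y t -> X t)) :
  forall l : list (T -> Prop), l <> [] -> (forall X, In X l -> F X) ->
  exists Y, F Y /\ forall X, In X l -> forall t, X t -> Y t.
Proof.
  induction l as [|a l IH]; intros ne HF; [congruence|].
  destruct l as [|b l'].
  - exists a. split; [apply HF; simpl; auto|]. intros X [<-|[]]; auto.
  - destruct IH as [Y [FY HY]]; [congruence| intros; apply HF; simpl; auto |].
    destruct (Htot a Y (HF a (or_introl eq_refl)) FY) as [h|h].
    + exists Y; split; auto. intros X [<-|hX]; eauto.
    + exists a; split; [apply HF; simpl; auto|]. intros X [<-|hX] t Xt; eauto.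
Qed.

Definition PU {G : TopGroup} (X : Flow G) (U : X -> Prop) :=
  is_open (ftop X) U /\ invariant X U /\ exists x, ~ U x.

Lemma max_open_inv {G : TopGroup} (X : Flow G) : (exists x : X, True) ->
  exists U, PU X U /\ forall B, (forall t, U t -> B t) -> PU X B -> forall t, B t -> U t.
Proof.
  intros [x0 _]. apply zorn_sets.
  intros F HF Htot. split; [|split].
  - apply open_ex. intros V FV; apply HF; auto.
  - intros g x [V [FV hV]]. exists V; split; auto. apply (HF V FV); auto.
  - apply NNPP; intro Hfull.
    assert (Hc : forall x, exists i : {V | F V}, proj1_sig i x).
    { intro x. apply NNPP; intro nx. apply Hfull. exists x. intros [V [FV hV]].
      apply nx. exists (exist _ V FV); auto. }
    destruct (fcompact G X {V | F V} (fun i => proj1_sig i)) as [l Hl]; auto.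
    { intros [V FV]; simpl; apply HF; auto. }
    destruct (chain_max F Htot (map (@proj1_sig _ _) l)) as [Y [FY HY]].
    + destruct (Hl x0) as [i [hi _]]. destruct l; [destruct hi| discriminate].
    + intros X' hX. apply in_map_iff in hX. destruct hX as [[V FV] [<- _]]; auto.
    + destruct (HF Y FY) as [_ [_ [y ny]]]. apply ny.
      destruct (Hl y) as [i [hi hy]]. apply (HY (proj1_sig i)); auto.
      apply in_map; auto.
Qed.

Lemma sig_eq {A} {P : A -> Prop} (x y : sig P) : proj1_sig x = proj1_sig y -> x = y.
Proof.
  destruct x as [x px], y as [y py]; simpl; intro E; subst.
  f_equal; apply proof_irrelevance.
Qed.

Definition sub_open {X} (t : Topology X) (K : X -> Prop) (V : sig K -> Prop) :=
  exists U, is_open t U /\ forall s, V s <-> U (proj1_sig s).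

Definition subTop {X} (t : Topology X) (K : X -> Prop) : Topology (sig K).
Proof.
  refine {| is_open := sub_open t K |}.
  - exists (fun _ => True); split; [apply open_full| tauto].
  - intros A B [UA [hA eA]] [UB [hB eB]]. exists (fun x => UA x /\ UB x); split.
    + apply open_inter; auto.
    + intro s; specialize (eA s); specialize (eB s); tauto.
  - intros I F HF.
    assert (HF' : forall i, {U | is_open t U /\ forall s, F i s <-> U (proj1_sig s)}).
    { intro i; apply constructive_indefinite_description; apply HF. }
    exists (fun x => exists i, proj1_sig (HF' i) x); split.
    + apply open_union. intro i; exact (proj1 (proj2_sig (HF' i))).
    + intro s; split.
      * intros [i hi]; exists i; apply (proj2 (proj2_sig (HF' i))); auto.
      * intros [i hi]; exists i; apply (proj2 (proj2_sig (HF' i))); auto.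
Defined.

Section Sub.
Context {G : TopGroup} (X : Flow G) (U : X -> Prop) (HU : PU X U).

Definition K := fun x : X => ~ U x.

Lemma K_inv g x : K x -> K (act X g x).
Proof.
  unfold K; intros h1 h2. apply h1. destruct HU as [_ [hi _]].
  rewrite <- (act_inv X g x). apply hi; auto.
Qed.

Definition sact (g : G) (s : sig K) : sig K :=
  exist K (act X g (proj1_sig s)) (K_inv g _ (proj2_sig s)).

Lemma sub_compact : compact (subTop (ftop X) K).
Proof.
  intros I F HF Hc.
  assert (HF' : forall i, {V | is_open (ftop X) V /\ forall s, F i s <-> V (proj1_sig s)}).
  { intro i; apply constructive_indefinite_description; apply HF. }
  destruct (fcompact G X (option I) (fun o => match o with None => U | Some i => proj1_sig (HF' i) end))
    as [l Hl].
  - intros [i|]; [exact (proj1 (proj2_sig (HF' i))) | apply HU].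
  - intro x. destruct (classic (U x)) as [h|h]; [exists None; auto|].
    destruct (Hc (exist K x h)) as [i hi]. exists (Some i).
    apply (proj2 (proj2_sig (HF' i))) in hi; auto.
  - exists (flat_map (fun o => match o with None => [] | Some i => [i] end) l).
    intros [x kx]. destruct (Hl x) as [[i|] [hin hx]].
    + exists i; split.
      * apply in_flat_map. exists (Some i); simpl; auto.
      * apply (proj2 (proj2_sig (HF' i))); auto.
    + exfalso; auto.
Qed.

Lemma sub_hausdorff : hausdorff (subTop (ftop X) K).
Proof.
  intros [x kx] [y ky] ne.
  assert (ne' : x <> y) by (intro E; subst; apply ne; apply sig_eq; auto).
  destruct (fhausdorff G X x y ne') as [A [B [hA [hB [ha [hb hd]]]]]].
  exists (fun s => A (proj1_sig s)), (fun s => B (proj1_sig s)).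
  repeat split; simpl; auto.
  all: try (exists A; split; auto; tauto).
  all: try (exists B; split; auto; tauto).
  all: try (intros [z kz]; simpl; apply hd).
Qed.

Lemma sub_act1 x : sact (gone G) x = x.
Proof. apply sig_eq; simpl; apply act1. Qed.

Lemma sub_actM g h x : sact (gmul G g h) x = sact g (sact h x).
Proof. apply sig_eq; simpl; apply actM. Qed.

Lemma sub_cont : continuous2 (gtop G) (subTop (ftop X) K) (subTop (ftop X) K) sact.
Proof.
  intros g [x kx] W [UW [hUW eW]] hW.
  apply eW in hW; simpl in hW.
  destruct (act_cont G X g x UW hUW hW) as [A [B [hA [hB [ha [hb h]]]]]].
  exists A, (fun s => B (proj1_sig s)). repeat split; auto.
  - exists B; split; auto; tauto.
  - intros a [b kb] h1 h2. apply eW; simpl. apply h; auto.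
Qed.

Definition subflow : Flow G :=
  {| fcar := sig K; ftop := subTop (ftop X) K; fcompact := sub_compact;
     fhausdorff := sub_hausdorff; act := sact; act1 := sub_act1; actM := sub_actM;
     act_cont := sub_cont |}.

Lemma subflow_minimal
  (Hmax : forall B, (forall t, U t -> B t) -> PU X B -> forall t, B t -> U t) :
  minimal_flow subflow.
Proof.
  split.
  - destruct HU as [_ [_ [x nx]]]. exists (exist K x nx); auto.
  - intros s0 O [UO [hUO eO]] [k hk].
    apply NNPP; intro Hn.
    set (U' := fun x => U x \/ exists V, (is_open (ftop X) V /\ forall g, ~ V (act X g (proj1_sig s0))) /\ V x).
    assert (PU' : PU X U').
    { split; [|split].
      - apply open_or; [apply HU|]. apply open_ex. intros V [h _]; auto.
      - intros g x [hx|[V [[hV hnV] hx]]].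
        + left. apply HU; auto.
        + right. exists (fun z => V (act X (ginv G g) z)). split; [split|].
          * apply act_open; auto.
          * intros g' h. rewrite <- actM in h. apply (hnV _ h).
          * rewrite act_inv; auto.
      - exists (proj1_sig s0). intros [h|[V [[_ hnV] hV]]].
        + exact (proj2_sig s0 h).
        + apply (hnV (gone G)). rewrite act1; auto. }
    assert (hk' : U' (proj1_sig k)).
    { right. exists UO. split; [split|]; auto.
      - intros g hg. apply Hn. exists (sact g s0). split.
        + apply eO. simpl. auto.
        + exists g; auto.
      - apply eO; auto. }
    apply (proj2_sig k). apply (Hmax U'); auto.
    intros t ht; left; auto.
Qed.

End Sub.

Section Prod.
Context {G : TopGroup} (I : Type) (Z : I -> Flow G).

Definition Pcar := forall i, Z i.
Definition Bas := list {i : I & Z i -> Prop}.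
Definition basic (L : Bas) (f : Pcar) := forall p, In p L -> projT2 p (f (projT1 p)).
Definition okL (L : Bas) := forall p, In p L -> is_open (ftop (Z (projT1 p))) (projT2 p).
Definition Popen (W : Pcar -> Prop) :=
  forall f, W f -> exists L, okL L /\ basic L f /\ forall h, basic L h -> W h.

Definition PTop : Topology Pcar.
Proof.
  refine {| is_open := Popen |}.
  - intros f _. exists []. repeat split; intros p [].
  - intros A B hA hB f [fa fb].
    destruct (hA f fa) as [L1 [o1 [b1 h1]]]. destruct (hB f fb) as [L2 [o2 [b2 h2]]].
    exists (L1 ++ L2). repeat split.
    + intros p hp; apply in_app_or in hp; destruct hp; [apply o1|apply o2]; auto.
    + intros p hp; apply in_app_or in hp; destruct hp; [apply b1|apply b2]; auto.
    + apply h1; intros p hp; apply H; apply in_or_app; auto.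
    + apply h2; intros p hp; apply H; apply in_or_app; auto.
  - intros J F HF f [j hj].
    destruct (HF j f hj) as [L [o [b h]]]. exists L; repeat split; auto.
    intros k hk; exists j; auto.
Defined.

Lemma basic_open L : okL L -> Popen (basic L).
Proof. intros o f b. exists L; repeat split; auto. Qed.

Lemma P_hausdorff : hausdorff PTop.
Proof.
  intros f h ne.
  assert (exists i, f i <> h i) as [i hi].
  { apply NNPP; intro H. apply ne. apply functional_extensionality_dep.
    intro i. apply NNPP; intro H'. apply H; eauto. }
  destruct (fhausdorff G (Z i) _ _ hi) as [A [B [hA [hB [ha [hb hd]]]]]].
  exists (basic [existT _ i A]), (basic [existT _ i B]).
  repeat split.
  - apply basic_open. intros p [<-|[]]; auto.
  - apply basic_open. intros p [<-|[]]; auto.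
  - intros p [<-|[]]; auto.
  - intros p [<-|[]]; auto.
  - intros z [h1 h2]. apply (hd (z i)). split.
    + apply (h1 (existT _ i A)); simpl; auto.
    + apply (h2 (existT _ i B)); simpl; auto.
Qed.

Definition Pact (g : G) (f : Pcar) : Pcar := fun i => act (Z i) g (f i).

Lemma P_act1 f : Pact (gone G) f = f.
Proof. apply functional_extensionality_dep; intro i; apply act1. Qed.

Lemma P_actM g h f : Pact (gmul G g h) f = Pact g (Pact h f).
Proof. apply functional_extensionality_dep; intro i; apply actM. Qed.

Lemma P_cont_aux g f : forall L, okL L -> basic L (Pact g f) ->
  exists U L', is_open (gtop G) U /\ U g /\ okL L' /\ basic L' f /\
    forall a b, U a -> basic L' b -> basic L (Pact a b).
Proof.
  induction L as [|[i B] L IH]; intros o b.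
  - exists (fun _ => True), []. repeat split; try apply open_full; try (intros p []).
    intros a c _ _ p [].
  - destruct IH as [U [L' [hU [hg [o' [b' h]]]]]].
    + intros p hp; apply o; simpl; auto.
    + intros p hp; apply b; simpl; auto.
    + assert (hB : is_open (ftop (Z i)) B) by (apply (o (existT _ i B)); simpl; auto).
      assert (hB' : B (act (Z i) g (f i))) by (apply (b (existT _ i B)); simpl; auto).
      destruct (act_cont G (Z i) g (f i) B hB hB') as [U1 [V1 [hU1 [hV1 [hg1 [hf1 h1]]]]]].
      exists (fun x => U1 x /\ U x), (existT _ i V1 :: L'). repeat split; auto.
      * apply open_inter; auto.
      * intros p [<-|hp]; simpl; auto.
      * intros p [<-|hp]; simpl; auto.
      * intros a c [ha1 ha] hc p [<-|hp].
        -- simpl. unfold Pact. apply h1; auto. apply (hc (existT _ i V1)); simpl; auto.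
        -- apply h; auto. intros q hq; apply hc; simpl; auto.
Qed.

Lemma P_cont : continuous2 (gtop G) PTop PTop Pact.
Proof.
  intros g f W hW hWf.
  destruct (hW _ hWf) as [L [o [b h]]].
  destruct (P_cont_aux g f L o b) as [U [L' [hU [hg [o' [b' h']]]]]].
  exists U, (basic L'). repeat split; auto.
  all: try (apply basic_open; auto).
  all: try (intros a c ha hc; apply h; apply h'; auto).
Qed.

(* Tychonoff *)
Definition fip (Fam : (Pcar -> Prop) -> Prop) :=
  forall l, (forall X, In X l -> Fam X) -> exists x, forall X, In X l -> X x.

Lemma split_list (Q : (Pcar -> Prop) -> Prop) (B : Pcar -> Prop) :
  forall l, (forall X, In X l -> Q X \/ X = B) ->
  exists l1, (forall X, In X l1 -> Q X) /\
    forall x, (forall X, In X l1 -> X x) -> B x -> forall X, In X l -> X x.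
Proof.
  induction l as [|a l IH]; intros H.
  - exists []. split; [intros X []|]. intros x _ _ X [].
  - destruct IH as [l1 [h1 h2]]. { intros; apply H; simpl; auto. }
    destruct (H a (or_introl eq_refl)) as [qa|ea].
    + exists (a :: l1). split.
      * intros X [<-|hX]; auto.
      * intros x hx bx X [<-|hX]. { apply hx; simpl; auto. }
        apply h2; auto. intros; apply hx; simpl; auto.
    + exists l1. split; auto. intros x hx bx X [<-|hX]; [subst; auto|]. apply h2; auto.
Qed.

Lemma fip_ultra (Fam : (Pcar -> Prop) -> Prop) (B : Pcar -> Prop) :
  fip Fam -> fip (fun X => Fam X \/ X = B) \/ fip (fun X => Fam X \/ X = (fun x => ~ B x)).
Proof.
  intros H. apply NNPP; intro Hn.
  apply not_or_and in Hn; destruct Hn as [n1 n2].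
  apply not_all_ex_not in n1; destruct n1 as [l1 n1].
  apply not_all_ex_not in n2; destruct n2 as [l2 n2].
  apply imply_to_and in n1; destruct n1 as [i1 n1].
  apply imply_to_and in n2; destruct n2 as [i2 n2].
  destruct (split_list Fam B l1 i1) as [k1 [hk1 e1]].
  destruct (split_list Fam _ l2 i2) as [k2 [hk2 e2]].
  destruct (H (k1 ++ k2)) as [x hx].
  { intros X hX; apply in_app_or in hX; destruct hX; auto. }
  destruct (classic (B x)) as [bx|bx].
  - apply n1. exists x. apply e1; auto. intros; apply hx; apply in_or_app; auto.
  - apply n2. exists x. apply e2; auto. intros; apply hx; apply in_or_app; auto.
Qed.

Lemma P_compact : compact PTop.
Proof.
  intros J C HC Hcov. apply NNPP; intro Hno.
  assert (H0 : forall l : list J, exists x, forall j, In j l -> ~ C j x).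
  { intro l. apply NNPP; intro H. apply Hno. exists l. intro x.
    apply NNPP; intro H'. apply H. exists x. intros j hj cj. apply H'; eauto. }
  set (F0 := fun X : Pcar -> Prop => exists j, forall x, X x <-> ~ C j x).
  set (Pz := fun A : (Pcar -> Prop) -> Prop => fip (fun X => F0 X \/ A X)).
  assert (fip0 : fip F0).
  { intros l. induction l as [|a l IH]; intros hl.
    - destruct (H0 []) as [x _]. exists x; intros X [].
    - assert (exists l', forall X, In X (a :: l) -> exists j, In j l' /\ forall x, X x <-> ~ C j x)
        as [l' hl'].
      { clear IH. induction (a :: l) as [|b m IHm].
        - exists []; intros X [].
        - destruct IHm as [m' hm']. { intros; apply hl; simpl; auto. }
          destruct (hl b (or_introl eq_refl)) as [j hj].
          exists (j :: m'). intros X [<-|hX].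
          + exists j; split; simpl; auto.
          + destruct (hm' X hX) as [j' [h1 h2]]. exists j'; split; simpl; auto. }
      destruct (H0 l') as [x hx]. exists x. intros X hX.
      destruct (hl' X hX) as [j [hj e]]. apply e. apply hx; auto. }
  destruct (zorn_sets _ Pz) as [A [PA maxA]].
  { intros F HF Htot l hl.
    assert (Hsplit : forall l : list (Pcar -> Prop),
      (forall X, In X l -> F0 X \/ exists Y, F Y /\ Y X) ->
      (forall X, In X l -> F0 X) \/ exists Y, F Y /\ forall X, In X l -> F0 X \/ Y X).
    { induction l0 as [|a l0 IH]; intros H.
      - left; intros X [].
      - destruct IH as [h|[Y [FY hY]]]. { intros; apply H; simpl; auto. }
        + destruct (H a (or_introl eq_refl)) as [fa|[Y [FY ya]]].
          * left. intros X [<-|hX]; auto.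
          * right. exists Y; split; auto. intros X [<-|hX]; auto.
        + right. destruct (H a (or_introl eq_refl)) as [fa|[Y' [FY' ya]]].
          * exists Y; split; auto. intros X [<-|hX]; auto.
          * destruct (Htot Y Y' FY FY') as [s|s].
            -- exists Y'; split; auto. intros X [<-|hX]; auto.
               destruct (hY X hX); auto.
            -- exists Y; split; auto. intros X [<-|hX]; auto. }
    destruct (Hsplit l hl) as [h|[Y [FY hY]]].
    - apply fip0; auto.
    - apply (HF Y FY); auto. }
  assert (ultra : forall B, A B \/ A (fun x => ~ B x)).
  { intro B. destruct (fip_ultra _ B PA) as [h|h].
    - left. apply (maxA (fun X => A X \/ X = B)); auto.
      unfold Pz. intros l hl. apply h. intros X hX. destruct (hl X hX) as [?|[?|?]]; auto.
    - right. apply (maxA (fun X => A X \/ X = (fun x => ~ B x))); auto.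
      unfold Pz. intros l hl. apply h. intros X hX. destruct (hl X hX) as [?|[?|?]]; auto. }
  assert (coord : forall i, exists xi : Z i, forall B, is_open (ftop (Z i)) B -> B xi -> A (fun f => B (f i))).
  { intro i. apply NNPP; intro Hn.
    assert (Hc : forall x : Z i, exists b : {B | is_open (ftop (Z i)) B /\ ~ A (fun f => B (f i))}, proj1_sig b x).
    { intro x. apply NNPP; intro H1. apply Hn. exists x. intros B hB bx.
      apply NNPP; intro nA. apply H1. exists (exist _ B (conj hB nA)); auto. }
    destruct (fcompact G (Z i) {B | is_open (ftop (Z i)) B /\ ~ A (fun f => B (f i))} (fun b => proj1_sig b)) as [l hl]; auto.
    { intros [B hB]; apply hB. }
    destruct (PA (map (fun b => fun f : Pcar => ~ proj1_sig b (f i)) l)) as [f hf].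
    { intros X hX. apply in_map_iff in hX. destruct hX as [[B [hB nA]] [<- _]]. right.
      simpl. destruct (ultra (fun f => B (f i))); [contradiction|auto]. }
    destruct (hl (f i)) as [b [hb fb]].
    apply (hf (fun f0 : Pcar => ~ proj1_sig b (f0 i))); auto.
    apply in_map_iff. exists b; auto. }
  set (x := fun i => proj1_sig (constructive_indefinite_description _ (coord i))).
  assert (hx : forall i B, is_open (ftop (Z i)) B -> B (x i) -> A (fun f => B (f i))).
  { intros i. exact (proj2_sig (constructive_indefinite_description _ (coord i))). }
  destruct (Hcov x) as [j hj].
  destruct (HC j x hj) as [L [o [b h]]].
  destruct (PA ((fun f => ~ C j f) :: map (fun p : {i : I & Z i -> Prop} => fun f : Pcar => projT2 p (f (projT1 p))) L))
    as [f hf].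
  { intros X [<-|hX].
    - left. exists j; tauto.
    - apply in_map_iff in hX. destruct hX as [p [<- hp]]. right. apply hx; auto. }
  apply (hf (fun f => ~ C j f)); simpl; auto.
  apply h. intros p hp. apply (hf (fun f : Pcar => projT2 p (f (projT1 p)))). right.
  apply in_map_iff; eauto.
Qed.

Definition PFlow : Flow G :=
  {| fcar := Pcar; ftop := PTop; fcompact := P_compact; fhausdorff := P_hausdorff;
     act := Pact; act1 := P_act1; actM := P_actM; act_cont := P_cont |}.

End Prod.

Lemma surj_lemma {G : TopGroup} (M Y : Flow G) (f : M -> Y) :
  continuous (ftop M) (ftop Y) f -> equivariant M Y f -> (exists m : M, True) ->
  minimal_flow Y -> surjective f.
Proof.
  intros hc he [m0 _] [_ hmin] y. apply NNPP; intro Hn.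
  set (J := {W : Y -> Prop | is_open (ftop Y) W /\ exists V, is_open (ftop Y) V /\ V y /\ forall z, ~ (W z /\ V z)}).
  destruct (fcompact G M J (fun j m => proj1_sig j (f m))) as [l hl].
  - intros [W hW]; simpl. apply hc; apply hW.
  - intro m. assert (ne : f m <> y) by (intro E; apply Hn; eauto).
    destruct (fhausdorff G Y _ _ ne) as [A [B [hA [hB [ha [hb hd]]]]]].
    exists (exist _ A (conj hA (ex_intro _ B (conj hB (conj hb hd))))); simpl; auto.
  - assert (exists V, is_open (ftop Y) V /\ V y /\ forall j, In j l -> forall z, ~ (proj1_sig j z /\ V z))
      as [V [hV [vy hVd]]].
    { clear hl. induction l as [|j l IH].
      - exists (fun _ => True); repeat split; auto; try apply open_full; try (intros j []).
      - destruct IH as [V [hV [vy hVd]]].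
        destruct (proj2_sig j) as [_ [V' [hV' [vy' hd']]]].
        exists (fun z => V z /\ V' z). repeat split; auto.
        + apply open_inter; auto.
        + intros j' [<-|hj] z [h1 [h2 h3]].
          * apply (hd' z); auto.
          * apply (hVd j' hj z); auto. }
    destruct (hmin (f m0) V hV (ex_intro _ y vy)) as [z [vz [g <-]]].
    rewrite <- he in vz.
    destruct (hl (act M g m0)) as [j [hj hjm]].
    apply (hVd j hj _ (conj hjm vz)).
Qed.

Definition Carr (G : TopGroup) := (G -> Prop) -> Prop.

Definition Good {G : TopGroup} (S : Carr G -> Prop) (op : (sig S -> Prop) -> Prop)
  (a : G -> sig S -> sig S) : Prop :=
  exists F : Flow G, (exists x : F, True) /\ exists (e : F -> sig S) (r : sig S -> F),
    (forall x, r (e x) = x) /\ (forall s, e (r s) = s) /\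
    (forall V, op V <-> is_open (ftop F) (fun x => V (e x))) /\
    (forall g s, a g s = e (act F g (r s))).

Definition Code (G : TopGroup) :=
  {S : Carr G -> Prop & {op : (sig S -> Prop) -> Prop & {a : G -> sig S -> sig S | Good S op a}}}.

Definition ZF {G : TopGroup} (c : Code G) : Flow G :=
  proj1_sig (constructive_indefinite_description _ (proj2_sig (projT2 (projT2 c)))).

Lemma ZF_spec {G : TopGroup} (c : Code G) :
  (exists x : ZF c, True) /\ exists (e : ZF c -> sig (projT1 c)) (r : sig (projT1 c) -> ZF c),
    (forall x, r (e x) = x) /\ (forall s, e (r s) = s) /\
    (forall V, projT1 (projT2 c) V <-> is_open (ftop (ZF c)) (fun x => V (e x))) /\
    (forall g s, proj1_sig (projT2 (projT2 c)) g s = e (act (ZF c) g (r s))).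
Proof.
  unfold ZF. exact (proj2_sig (constructive_indefinite_description _ (proj2_sig (projT2 (projT2 c))))).
Qed.

Definition UP (G : TopGroup) : Flow G := PFlow (Code G) ZF.

Lemma UP_nonempty (G : TopGroup) : exists x : UP G, True.
Proof.
  assert (h : forall c : Code G, exists x : ZF c, True) by (intro c; apply (ZF_spec c)).
  exists (fun c => proj1_sig (constructive_indefinite_description _ (h c))); auto.
Qed.

Definition enc {G : TopGroup} (Y : Flow G) (y0 : Y) (y : Y) : Carr G :=
  fun A => forall V, is_open (ftop Y) V -> V y -> exists g, A g /\ V (act Y g y0).

Lemma enc_inj {G : TopGroup} (Y : Flow G) (y0 : Y) :
  dense (ftop Y) (orbit Y y0) -> forall y z, enc Y y0 y = enc Y y0 z -> y = z.
Proof.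
  intros hd y z E. apply NNPP; intro ne.
  destruct (fhausdorff G Y y z ne) as [U [V [hU [hV [uy [vz hUV]]]]]].
  assert (h1 : enc Y y0 y (fun g => U (act Y g y0))).
  { intros W hW wy. destruct (hd (fun x => W x /\ U x)) as [x [[wx ux] [g <-]]].
    - apply open_inter; auto.
    - exists y; auto.
    - exists g; auto. }
  rewrite E in h1. destruct (h1 V hV vz) as [g [h2 h3]].
  apply (hUV (act Y g y0)); auto.
Qed.

Lemma UMF_exists (G : TopGroup) : exists M : Flow G, universal_minimal_flow M.
Proof.
  destruct (max_open_inv (UP G) (UP_nonempty G)) as [U [PUU maxU]].
  exists (subflow (UP G) U PUU). split.
  { apply subflow_minimal; auto. }
  intros Y [[y0 _] hd].
  set (S := fun p => exists y, enc Y y0 y = p).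
  set (eY := fun y => exist S (enc Y y0 y) (ex_intro _ y eq_refl)).
  set (rY := fun s : sig S => proj1_sig (constructive_indefinite_description _ (proj2_sig s))).
  assert (hrY : forall s, enc Y y0 (rY s) = proj1_sig s).
  { intro s. exact (proj2_sig (constructive_indefinite_description _ (proj2_sig s))). }
  assert (re : forall y, rY (eY y) = y).
  { intro y. apply (enc_inj Y y0 (hd y0)). rewrite hrY. reflexivity. }
  assert (er : forall s, eY (rY s) = s).
  { intro s. apply sig_eq. simpl. apply hrY. }
  set (op := fun V : sig S -> Prop => is_open (ftop Y) (fun y => V (eY y))).
  set (a := fun g s => eY (act Y g (rY s))).
  assert (good : Good S op a).
  { exists Y. split; [exists y0; auto|]. exists eY, rY. repeat split; auto. }
  set (c := existT _ S (existT _ op (exist _ a good)) : Code G).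
  destruct (ZF_spec c) as [_ [eF [rF [h1 [h2 [h3 h4]]]]]].
  simpl in eF, rF, h1, h2, h3, h4.
  set (phi := fun m : subflow (UP G) U PUU => rY (eF (proj1_sig m c))).
  assert (hcont : continuous (ftop (subflow (UP G) U PUU)) (ftop Y) phi).
  { intros V hV. exists (fun f : UP G => V (rY (eF (f c)))). split.
    - intros f hf. exists [existT (fun c => ZF c -> Prop) c (fun z => V (rY (eF z)))].
      repeat split.
      + intros p [<-|[]]. simpl. apply (h3 (fun s => V (rY s))).
        unfold op. apply open_ext with (A := V); auto.
        intro y. rewrite re. tauto.
      + intros p [<-|[]]. simpl. auto.
      + intros h hh. apply (hh (existT (fun c => ZF c -> Prop) c (fun z => V (rY (eF z))))).
        simpl; auto.
    - intro s. unfold phi. tauto. }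
  assert (hequi : equivariant (subflow (UP G) U PUU) Y phi).
  { intros g m. unfold phi. simpl. unfold Pact.
    assert (E : forall x, eF (act (ZF c) g x) = a g (eF x)) by (intro x; rewrite h4, h1; reflexivity).
    rewrite E. unfold a. rewrite re. reflexivity. }
  exists phi. split; [|split]; auto.
  apply surj_lemma; auto.
  - pose proof PUU as [_ [_ [x nx]]]. exists (exist _ x nx); auto.
  - split; [exists y0; auto | auto].
Qed.

Lemma open_avoid {X} (t : Topology X) (Ht : hausdorff t) (Q : X -> Prop) :
  forall l : list X, is_open t (fun z => forall w, In w l -> Q w -> z <> w).
Proof.
  induction l as [|w l IH].
  - apply open_ext with (A := fun _ => True); [apply open_full|]. intro z; split; auto; intros _ w0 [].
  - apply open_ext with (A := fun z => (Q w -> z <> w) /\ (forall w', In w' l -> Q w' -> z <> w')).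
    + apply open_inter; auto. destruct (classic (Q w)) as [q|q].
      * apply open_ext with (A := fun z => z <> w); [apply open_neq; auto|]. tauto.
      * apply open_ext with (A := fun _ => True); [apply open_full|]. tauto.
    + intro z; split.
      * intros [h1 h2] w' [<-|hw']; auto.
      * intros h; split; [apply h; simpl; auto| intros; apply h; simpl; auto].
Qed.

Theorem mainTheorem5 (G : TopGroup) (HG : hausdorff (gtop G)) (d : nat) :
  (forall M : Flow G, universal_minimal_flow M ->
     card_le (fun _ : M => True) d)
  <->
  (forall X : Flow G, (exists x : X, True) ->
     exists x : X, card_le (orbit X x) d).
Proof.
  split.
  - intros H X hX.
    destruct (max_open_inv X hX) as [U [PUU maxU]].
    pose proof (subflow_minimal X U PUU maxU) as hmin.
    destruct (UMF_exists G) as [M hM].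
    destruct (H M hM) as [l [hlen hl]].
    destruct hM as [_ hM]. destruct (hM _ hmin) as [f [_ [_ hs]]].
    destruct hmin as [[k0 _] _].
    exists (proj1_sig k0). exists (map (fun m => proj1_sig (f m)) l). split.
    + rewrite length_map; auto.
    + intros y [g <-]. destruct (hs (act (subflow X U PUU) g k0)) as [m hm].
      apply in_map_iff. exists m. split; auto. rewrite hm. reflexivity.
  - intros H M [[hne hd] _].
    destruct (H M hne) as [x [l [hlen hl]]].
    exists l. split; auto. intros y _.
    destruct (classic (orbit M x y)) as [hy|hy]; [auto|].
    exfalso.
    destruct (hd x (fun z => forall w, In w l -> orbit M x w -> z <> w)) as [z [hz oz]].
    + apply open_avoid. apply fhausdorff.
    + exists y. intros w hw ow E. subst; auto.
    + apply (hz z); auto.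
Qed.
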